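(* Fix $\varepsilon>0$, $\beta\in(0,1)$, an even integer $d>4(e^{2\varepsilon}-1)^2\ln\frac2\beta$, and $\varepsilon$-private randomizers $R_1,\dots,R_n:[d]\to\mathcal Y$. Let $v=(e^{2\varepsilon}-1)\sqrt{\frac4d\ln\frac2\beta}$. If $H$ is chosen uniformly among subsets of $[d]$ of size $d/2$, then with probability at least $5/6$ over $H$, \[ \forall i\in[n]:\quad \Pr\left[R_i(\mathbf U)\in \mathit{Leak}(v,H,R_i)\right]<6\beta n . \]
   Context: $\mathcal Y$ is a countable message set. A randomizer $R:[d]\to\mathcal Y$ is $\varepsilon$-private if for all $x,x'\in[d]$ and all $Y\subseteq\mathcal Y$, $\Pr[R(x)\in Y]\le e^{\varepsilon}\Pr[R(x')\in Y]$. $\mathbf U$ is the uniform distribution on $[d]$; for $H\subseteq[d]$, $\mathbf U_H$ is the uniform distribution on $H$; $R(\mathbf U)$, $R(\mathbf U_H)$ are the distributions of $R(\hat x)$ for $\hat x\sim\mathbf U$, resp. $\hat x\sim\mathbf U_H$. For $H\subset[d]$ with $|H|=d/2$, a message $y$ is $v$-leaky with respect to $H,R$ if $\left|\ln\frac{\Pr[R(\mathbf U_H)=y]}{\Pr[R(\mathbf U)=y]}\right|>v$ (messages with $\Pr[R(\mathbf U)=y]=0$ are regarded as not leaky), and $\mathit{Leak}(v,H,R)$ is the set of $y\in\mathcal Y$ that are $v$-leaky with respect to $H,R$. *)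

(* Defs.v *)
From Stdlib Require Import Reals Lra Lia List Classical ClassicalEpsilon.
Import ListNotations.
Open Scope R_scope.

(* Message set Y is modelled as nat (any countable set embeds into nat,
   unused messages get probability 0).  Inputs [d] = {0,...,d-1}.
   A randomizer R : [d] -> Y is given by its probability mass functions
   R x : nat -> R, for x < d. *)

Definition restrict (S : nat -> Prop) (p : nat -> R) (y : nat) : R :=
  if excluded_middle_informative (S y) then p y else 0.

(* Pr[p in S] = sum_{y in S} p y  (value of the series; 0 if it diverges,
   which never happens for probability distributions) *)
Definition Pr (p : nat -> R) (S : nat -> Prop) : R :=
  match excluded_middle_informative (exists l, infinite_sum (restrict S p) l) with
  | left h => proj1_sig (constructive_indefinite_description _ h)
  | right _ => 0
  end.

Definition is_randomizer (d : nat) (Rz : nat -> nat -> R) : Prop :=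
  forall x, (x < d)%nat -> (forall y, 0 <= Rz x y) /\ infinite_sum (Rz x) 1.

Definition eps_private (eps : R) (d : nat) (Rz : nat -> nat -> R) : Prop :=
  is_randomizer d Rz /\
  forall x x' (S : nat -> Prop), (x < d)%nat -> (x' < d)%nat ->
    Pr (Rz x) S <= exp eps * Pr (Rz x') S.

Definition sum_below (d : nat) (f : nat -> R) : R :=
  fold_right Rplus 0 (map f (seq 0 d)).

(* A subset H of [d] is a bit list of length d; x in H iff nth x H false = true *)
Definition inH (H : list bool) (x : nat) : bool := nth x H false.
Definition cardH (H : list bool) : nat := count_occ Bool.bool_dec H true.

Definition RU (d : nat) (Rz : nat -> nat -> R) (y : nat) : R :=
  / INR d * sum_below d (fun x => Rz x y).

Definition RUH (d : nat) (H : list bool) (Rz : nat -> nat -> R) (y : nat) : R :=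
  / INR (cardH H) * sum_below d (fun x => if inH H x then Rz x y else 0).

(* y is v-leaky w.r.t. H, R.  Messages with Pr[R(U)=y]=0 are not leaky;
   if Pr[R(U_H)=y]=0 < Pr[R(U)=y] then |ln(0)| = +infinity > v, so leaky. *)
Definition leaky (v : R) (d : nat) (H : list bool) (Rz : nat -> nat -> R) (y : nat) : Prop :=
  0 < RU d Rz y /\
  (RUH d H Rz y = 0 \/ Rabs (ln (RUH d H Rz y / RU d Rz y)) > v).

Definition Leak (v : R) (d : nat) (H : list bool) (Rz : nat -> nat -> R) : nat -> Prop :=
  fun y => leaky v d H Rz y.

Fixpoint all_subsets (d : nat) : list (list bool) :=
  match d with
  | O => [ [] ]
  | S d' => map (cons false) (all_subsets d') ++ map (cons true) (all_subsets d')
  end.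

Definition half_subsets (d : nat) : list (list bool) :=
  filter (fun H => Nat.eqb (cardH H) (Nat.div d 2)) (all_subsets d).

Definition prob_H (d : nat) (P : list bool -> Prop) : R :=
  INR (length (filter (fun H => if excluded_middle_informative (P H) then true else false)
                      (half_subsets d)))
  / INR (length (half_subsets d)).

(* Main.v *)
Require Import Defs.
From Stdlib Require Import Reals Arith List Lra Lia Psatz.
From Stdlib Require Import Classical ClassicalEpsilon.
From Coquelicot Require Import Coquelicot.
Import ListNotations.
Open Scope R_scope.

Lemma exp_le_inc x y : x <= y -> exp x <= exp y.
Proof. intros [H|H]. left; apply exp_increasing; auto. subst; lra. Qed.

Lemma exp_quad_le z : z <= 1 -> exp z <= 1 + z + z^2.
Proof.
  intros Hz. destruct (Rle_lt_dec z 0) as [Hn|Hp].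
  - assert (H1 := exp_ineq1_le (-z)).
    assert (Hpos : 0 < 1 - z) by lra.
    assert (E : exp z = / exp (- z)).
    { rewrite exp_Ropp, Rinv_inv. reflexivity. }
    rewrite E.
    apply Rle_trans with (/ (1 - z)).
    + apply Rinv_le_contravar; lra.
    + apply (Rmult_le_reg_r (1 - z)); [lra|].
      rewrite Rinv_l by lra. nra.
  - set (f := fun t => (1 + t + t^2) * exp (- t)).
    destruct (MVT_gen f 0 z (fun t => (t - t^2) * exp (- t))) as [c [Hc Hf]].
    + intros x _. unfold f. auto_derive; [auto|]. ring.
    + intros x _. apply derivable_continuous_pt.
      unfold f. apply derivable_pt_mult.
      * apply derivable_pt_plus. apply derivable_pt_plus. apply derivable_pt_const. apply derivable_pt_id.
        apply derivable_pt_pow.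
      * apply derivable_pt_comp. apply derivable_pt_opp. apply derivable_pt_id. apply derivable_pt_exp.
    + rewrite Rmin_left in Hc by lra. rewrite Rmax_right in Hc by lra.
      assert (Hd : 0 <= (c - c^2) * exp (- c)).
      { apply Rmult_le_pos. nra. left; apply exp_pos. }
      assert (Hfz : 1 <= f z).
      { unfold f in Hf |- *. rewrite Ropp_0, exp_0 in Hf. nra. }
      unfold f in Hfz. rewrite exp_Ropp in Hfz.
      assert (He := exp_pos z).
      apply (Rmult_le_reg_r (/ exp z)). apply Rinv_0_lt_compat; lra.
      rewrite Rinv_r by lra. lra.
Qed.

Lemma exp_neg_half v : 0 <= v <= 1 -> exp (- v) <= 1 - v / 2.
Proof.
  intros Hv.
  set (f := fun t => exp t * (1 - t / 2)).
  destruct (MVT_gen f 0 v (fun t => exp t * (1 - t) / 2)) as [c [Hc Hf]].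
  - intros x _. unfold f. auto_derive. auto. field.
  - intros x _. apply derivable_continuous_pt.
    unfold f. apply derivable_pt_mult. apply derivable_pt_exp.
    apply derivable_pt_minus. apply derivable_pt_const.
    apply derivable_pt_div. apply derivable_pt_id. apply derivable_pt_const.
    all: try (intros; lra).
  - rewrite Rmin_left in Hc by lra. rewrite Rmax_right in Hc by lra.
    assert (Hd : 0 <= exp c * (1 - c) / 2).
    { assert (He := exp_pos c). apply Rmult_le_pos; [|lra]. nra. }
    assert (Hfz : 1 <= f v).
    { unfold f in Hf |- *. rewrite exp_0 in Hf. nra. }
    unfold f in Hfz. rewrite exp_Ropp.
    assert (He := exp_pos v).
    apply (Rmult_le_reg_l (exp v)); [lra|].
    rewrite Rinv_r by lra. lra.
Qed.

Lemma bern_mgf p x : 0 <= p <= 1 -> Rabs x <= 1 ->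
  p * exp ((1 - p) * x) + (1 - p) * exp (- (p * x)) <= exp (x ^ 2 / 4).
Proof.
  intros Hp Hx. apply Rabs_le_between in Hx.
  assert (H1 := exp_quad_le ((1 - p) * x) ltac:(nra)).
  assert (H2 := exp_quad_le (- (p * x)) ltac:(nra)).
  assert (H3 := exp_ineq1_le (x ^ 2 / 4)).
  apply Rle_trans with (1 + p * (1 - p) * x ^ 2).
  - apply Rle_trans with (p * (1 + (1 - p) * x + ((1 - p) * x) ^ 2)
        + (1 - p) * (1 + - (p * x) + (- (p * x)) ^ 2)).
    + apply Rplus_le_compat; apply Rmult_le_compat_l; lra.
    + right; ring.
  - assert (0 <= (p - 1/2)^2 * x^2) by (apply Rmult_le_pos; apply pow2_ge_0). lra.
Qed.
Lemma sum_below_S N f : sum_below (S N) f = f 0%nat + sum_below N (fun x => f (S x)).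
Proof.
  unfold sum_below. simpl. f_equal. rewrite <- seq_shift, map_map. reflexivity.
Qed.

Lemma sum_below_0 f : sum_below 0 f = 0.
Proof. reflexivity. Qed.

Lemma sum_below_le N : forall f g, (forall x, (x < N)%nat -> f x <= g x) ->
  sum_below N f <= sum_below N g.
Proof.
  induction N; intros f g H. rewrite !sum_below_0; lra.
  rewrite !sum_below_S. apply Rplus_le_compat. apply H; lia.
  apply IHN. intros; apply H; lia.
Qed.

Lemma sum_below_const N c : sum_below N (fun _ => c) = INR N * c.
Proof.
  induction N. rewrite sum_below_0; simpl; ring.
  rewrite sum_below_S, IHN, S_INR. ring.
Qed.

Lemma sum_below_ext N : forall f g, (forall x, (x < N)%nat -> f x = g x) ->
  sum_below N f = sum_below N g.
Proof.
  induction N; intros f g H. reflexivity.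
  rewrite !sum_below_S. rewrite (H 0%nat) by lia. f_equal.
  apply IHN. intros; apply H; lia.
Qed.

Lemma sum_below_scal N : forall c f, sum_below N (fun x => c * f x) = c * sum_below N f.
Proof.
  induction N; intros c f. rewrite !sum_below_0; ring.
  rewrite !sum_below_S, IHN. ring.
Qed.

Lemma sum_below_plus N : forall f g, sum_below N (fun x => f x + g x) = sum_below N f + sum_below N g.
Proof.
  induction N; intros f g. rewrite !sum_below_0; ring.
  rewrite !sum_below_S, IHN. ring.
Qed.

Definition lsum {A} (l : list A) (f : A -> R) : R := fold_right Rplus 0 (map f l).

Lemma lsum_app {A} (l1 l2 : list A) f : lsum (l1 ++ l2) f = lsum l1 f + lsum l2 f.
Proof. induction l1; simpl. unfold lsum; simpl; ring. unfold lsum in *; simpl. rewrite IHl1. ring. Qed.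

Lemma lsum_map {A B} (l : list A) (g : A -> B) f : lsum (map g l) f = lsum l (fun x => f (g x)).
Proof. unfold lsum. rewrite map_map. reflexivity. Qed.

Lemma lsum_ext {A} (l : list A) f g : (forall x, In x l -> f x = g x) -> lsum l f = lsum l g.
Proof.
  induction l; intros H. reflexivity. unfold lsum in *; simpl.
  rewrite H by (left; auto). rewrite IHl; auto. intros; apply H; right; auto.
Qed.

Lemma lsum_le {A} (l : list A) f g : (forall x, In x l -> f x <= g x) -> lsum l f <= lsum l g.
Proof.
  induction l; intros H. unfold lsum; simpl; lra. unfold lsum in *; simpl.
  apply Rplus_le_compat. apply H; left; auto. apply IHl. intros; apply H; right; auto.
Qed.

Lemma lsum_scal {A} (l : list A) c f : lsum l (fun x => c * f x) = c * lsum l f.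
Proof. induction l. unfold lsum; simpl; ring. unfold lsum in *; simpl. rewrite IHl. ring. Qed.

Lemma lsum_nonneg {A} (l : list A) f : (forall x, In x l -> 0 <= f x) -> 0 <= lsum l f.
Proof.
  induction l; intros H. unfold lsum; simpl; lra. unfold lsum in *; simpl.
  apply Rplus_le_le_0_compat. apply H; left; auto. apply IHl. intros; apply H; right; auto.
Qed.

Lemma lsum_plus {A} (l : list A) f g : lsum l (fun x => f x + g x) = lsum l f + lsum l g.
Proof. induction l. unfold lsum; simpl; ring. unfold lsum in *; simpl. rewrite IHl. ring. Qed.

Definition filt (N k : nat) : list (list bool) :=
  filter (fun H => Nat.eqb (cardH H) k) (all_subsets N).

Lemma filter_map_comm {A B} (f : B -> bool) (g : A -> B) l :
  filter f (map g l) = map g (filter (fun x => f (g x)) l).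
Proof. induction l; simpl. reflexivity. destruct (f (g a)); simpl; rewrite IHl; auto. Qed.

Lemma cardH_false H : cardH (false :: H) = cardH H.
Proof. reflexivity. Qed.
Lemma cardH_true H : cardH (true :: H) = S (cardH H).
Proof. reflexivity. Qed.

Lemma filt_S N k : filt (S N) k = map (cons false) (filt N k) ++
  match k with O => [] | S k' => map (cons true) (filt N k') end.
Proof.
  unfold filt. simpl. rewrite filter_app, !filter_map_comm. f_equal.
  destruct k.
  - induction (all_subsets N); simpl. reflexivity. exact IHl.
  - f_equal; try (apply filter_ext; intros H; rewrite cardH_true; reflexivity).
Qed.

Lemma filt_0 k : filt 0 k = match k with O => [[]] | S _ => [] end.
Proof. destruct k; reflexivity. Qed.

Definition cnt N k := length (filt N k).

Lemma cnt_S_S N k : cnt (S N) (S k) = (cnt N (S k) + cnt N k)%nat.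
Proof. unfold cnt. rewrite filt_S, length_app, !length_map. reflexivity. Qed.
Lemma cnt_S_0 N : cnt (S N) 0 = cnt N 0.
Proof. unfold cnt. rewrite filt_S, length_app, !length_map. simpl. lia. Qed.
Lemma cnt_0_0 : cnt 0 0 = 1%nat.
Proof. reflexivity. Qed.
Lemma cnt_0_S k : cnt 0 (S k) = 0%nat.
Proof. reflexivity. Qed.
Lemma cnt_N_0 N : cnt N 0 = 1%nat.
Proof. induction N. reflexivity. rewrite cnt_S_0; auto. Qed.

Lemma absorb N : forall k, (S k * cnt (S N) (S k) = S N * cnt N k)%nat.
Proof.
  induction N; intros k.
  - rewrite cnt_S_S. destruct k. rewrite cnt_0_S, cnt_0_0. reflexivity.
    rewrite !cnt_0_S. lia.
  - rewrite cnt_S_S. destruct k.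
    + rewrite !cnt_N_0.
      specialize (IHN 0%nat). rewrite cnt_N_0 in IHN. lia.
    + pose proof (IHN (S k)) as H1. pose proof (IHN k) as H2.
      rewrite (cnt_S_S N k) in *. nia.
Qed.

Definition sumH N H a := sum_below N (fun x => if inH H x then a x else 0).

Lemma sumH_cons N b H a : sumH (S N) (b :: H) a = (if b then a 0%nat else 0) + sumH N H (fun x => a (S x)).
Proof. unfold sumH. rewrite sum_below_S. reflexivity. Qed.

Lemma sumH_0 H a : sumH 0 H a = 0.
Proof. reflexivity. Qed.

Lemma step_alg C c1 c2 p x y : 0 <= C -> c1 = p * C -> c2 = (1 - p) * C -> 0 <= c2 -> 0 <= p ->
  Rabs x <= 1 -> x ^ 2 <= y -> c2 + c1 * exp x <= C * exp (p * x + y / 4).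
Proof.
  intros HC H1 H2 Hc2 Hp Hx Hy.
  destruct (Req_dec C 0) as [E|NE].
  - rewrite H1, H2, E. right; ring.
  - assert (Hp1 : p <= 1).
    { destruct (Rle_dec p 1); auto. exfalso. nra. }
    assert (Hb := bern_mgf p x (conj Hp Hp1) Hx).
    assert (Hm : exp (x ^ 2 / 4) <= exp (y / 4)).
    { apply exp_le_inc. lra. }
    assert (K : p * exp x + (1 - p) <= exp (p * x + y / 4)).
    { rewrite exp_plus.
      apply Rle_trans with (exp (p * x) * (p * exp ((1 - p) * x) + (1 - p) * exp (- (p * x)))).
      - right. rewrite Rmult_plus_distr_l.
        replace (exp (p * x) * (p * exp ((1 - p) * x))) with (p * (exp (p * x) * exp ((1 - p) * x))) by ring.
        rewrite <- exp_plus.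
        replace (exp (p * x) * ((1 - p) * exp (- (p * x)))) with ((1 - p) * (exp (p * x) * exp (- (p * x)))) by ring.
        rewrite <- exp_plus.
        replace (p * x + (1 - p) * x) with x by ring.
        replace (p * x + - (p * x)) with 0 by ring. rewrite exp_0. ring.
      - apply Rmult_le_compat_l. left; apply exp_pos. lra. }
    rewrite H1, H2. assert (0 < C) by lra. nra.
Qed.

Lemma mgf N : forall a k lo W lam, 0 <= W -> (forall x, (x < N)%nat -> lo <= a x <= lo + W) ->
  Rabs lam * W <= 1 ->
  lsum (filt N k) (fun H => exp (lam * sumH N H a)) <=
  INR (cnt N k) * exp (lam * INR k * (sum_below N a / INR N) + lam ^ 2 * INR N * W ^ 2 / 4).
Proof.
  induction N; intros a k lo W lam HW Ha Hl.
  - rewrite filt_0. unfold cnt. rewrite filt_0. destruct k.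
    + unfold lsum; simpl. rewrite sumH_0, sum_below_0. right. match goal with |- _ = _ * exp ?e => replace e with 0 by (unfold Rdiv; ring) end. rewrite Rmult_0_r, exp_0. ring.
    + unfold lsum; simpl. lra.
  - set (a' := fun x => a (S x)).
    assert (Ha' : forall x, (x < N)%nat -> lo <= a' x <= lo + W).
    { intros x Hx. apply Ha. lia. }
    rewrite filt_S. rewrite lsum_app, lsum_map.
    rewrite (lsum_ext _ _ (fun H => exp (lam * sumH N H a'))).
    2:{ intros H _. rewrite sumH_cons. change (if false then a 0%nat else 0) with 0. rewrite Rplus_0_l. reflexivity. }
    destruct k as [|k].
    + unfold lsum at 2. cbn [fold_right map]. rewrite Rplus_0_r.
      eapply Rle_trans. apply (IHN a' 0%nat lo W lam HW Ha' Hl).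
      rewrite cnt_S_0. apply Rmult_le_compat_l. apply pos_INR.
      apply exp_le_inc. rewrite S_INR. simpl. nra.
    + cbv beta iota. rewrite lsum_map.
      rewrite (lsum_ext (filt N k) _ (fun H => exp (lam * a 0%nat) * exp (lam * sumH N H a'))).
      2:{ intros H _. rewrite sumH_cons, <- exp_plus. change (if true then a 0%nat else 0) with (a 0%nat). f_equal. unfold a'. ring. }
      rewrite lsum_scal.
      destruct N as [|N].
      * unfold cnt. rewrite !filt_0, filt_S, filt_0. destruct k.
        -- unfold lsum; simpl. rewrite !sumH_0. unfold sumH, sum_below. simpl.
           rewrite Rmult_0_r, exp_0, Rplus_0_l, Rplus_0_r, Rmult_1_r, Rmult_1_l. apply exp_le_inc. replace ((a 0%nat + 0) / 1) with (a 0%nat) by field. nra.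
        -- unfold lsum; simpl. lra.
      * set (M := S N) in *.
        assert (HM : 0 < INR M) by (apply lt_0_INR; unfold M; lia).
        set (mu := sum_below M a' / INR M).
        assert (Hmu : lo <= mu <= lo + W).
        { unfold mu. split.
          - apply (Rmult_le_reg_r (INR M)); auto. unfold Rdiv. rewrite Rmult_assoc, Rinv_l by lra.
            rewrite Rmult_1_r. rewrite (Rmult_comm lo), <- sum_below_const.
            apply sum_below_le. intros; apply Ha'; auto.
          - apply (Rmult_le_reg_r (INR M)); auto. unfold Rdiv. rewrite Rmult_assoc, Rinv_l by lra.
            rewrite Rmult_1_r. rewrite (Rmult_comm (lo + W)), <- sum_below_const.
            apply sum_below_le. intros; apply Ha'; auto. }
        assert (Ha0 : lo <= a 0%nat <= lo + W) by (apply Ha; lia).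
        set (Q := lam ^ 2 * INR M * W ^ 2 / 4).
        set (c1 := INR (cnt M k)). set (c2 := INR (cnt M (S k))).
        set (C := INR (cnt (S M) (S k))).
        set (p := INR (S k) / INR (S M)).
        set (x := lam * (a 0%nat - mu)).
        set (E0 := exp (lam * INR (S k) * mu + Q)).
        assert (I1 := IHN a' (S k) lo W lam HW Ha' Hl).
        assert (I2 := IHN a' k lo W lam HW Ha' Hl).
        fold mu Q c1 c2 in I1, I2.
        apply Rle_trans with (c2 * exp (lam * INR (S k) * mu + Q) +
                              exp (lam * a 0%nat) * (c1 * exp (lam * INR k * mu + Q))).
        { apply Rplus_le_compat; auto. apply Rmult_le_compat_l; auto. left; apply exp_pos. }
        assert (HC : C = c1 + c2).
        { unfold C, c1, c2. rewrite cnt_S_S, plus_INR. ring. }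
        assert (HSM : INR (S M) = INR M + 1) by apply S_INR.
        assert (Hab : INR (S k) * C = INR (S M) * c1).
        { unfold C, c1. rewrite <- !mult_INR. f_equal. apply absorb. }
        assert (Hc1 : c1 = p * C).
        { unfold p. field_simplify_eq; [|lra]. lra. }
        assert (Hc2 : c2 = (1 - p) * C) by lra.
        assert (Hx : Rabs x <= 1).
        { unfold x. rewrite Rabs_mult. apply Rle_trans with (Rabs lam * W); auto.
          apply Rmult_le_compat_l. apply Rabs_pos. apply Rabs_le. lra. }
        assert (Hx2 : x ^ 2 <= lam ^ 2 * W ^ 2).
        { unfold x. assert (Rabs (a 0%nat - mu) <= W) by (apply Rabs_le; lra).
          rewrite <- Rpow_mult_distr. rewrite <- (pow2_abs (lam * (a 0%nat - mu))), <- (pow2_abs (lam * W)).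
          apply pow_incr. split. apply Rabs_pos. rewrite !Rabs_mult, (Rabs_pos_eq W HW).
          apply Rmult_le_compat_l. apply Rabs_pos. auto. }
        assert (Hst := step_alg C c1 c2 p x (lam ^ 2 * W ^ 2)
                 ltac:(rewrite HC; unfold c1, c2; generalize (pos_INR (cnt M k)) (pos_INR (cnt M (S k))); lra)
                 Hc1 Hc2 ltac:(apply pos_INR)
                 ltac:(unfold p; apply Rmult_le_pos; [apply pos_INR| left; apply Rinv_0_lt_compat; lra])
                 Hx Hx2).
        apply Rle_trans with (E0 * (c2 + c1 * exp x)).
        { right. unfold E0. rewrite Rmult_plus_distr_l.
          f_equal. ring.
          replace (exp (lam * INR (S k) * mu + Q) * (c1 * exp x)) with
            (c1 * (exp (lam * INR (S k) * mu + Q) * exp x)) by ring.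
          replace (exp (lam * a 0%nat) * (c1 * exp (lam * INR k * mu + Q))) with
            (c1 * (exp (lam * a 0%nat) * exp (lam * INR k * mu + Q))) by ring.
          rewrite <- !exp_plus. f_equal. f_equal. unfold x. rewrite S_INR. ring. }
        apply Rle_trans with (E0 * (C * exp (p * x + lam ^ 2 * W ^ 2 / 4))).
        { apply Rmult_le_compat_l; auto. left; apply exp_pos. }
        right. unfold E0.
        replace (exp (lam * INR (S k) * mu + Q) * (C * exp (p * x + lam ^ 2 * W ^ 2 / 4)))
          with (C * (exp (lam * INR (S k) * mu + Q) * exp (p * x + lam ^ 2 * W ^ 2 / 4))) by ring.
        rewrite <- exp_plus. f_equal. f_equal.
        rewrite sum_below_S. fold a'.
        assert (Hs : sum_below M a' = mu * INR M) by (unfold mu; field; lra).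
        rewrite Hs. unfold p, x, Q. rewrite HSM. field. lra.
Qed.

Definition cnt_if {A} (P : A -> Prop) (l : list A) : nat :=
  length (filter (fun x => if excluded_middle_informative (P x) then true else false) l).

Lemma cnt_if_mono {A} (P Q : A -> Prop) l : (forall x, In x l -> P x -> Q x) -> (cnt_if P l <= cnt_if Q l)%nat.
Proof.
  unfold cnt_if. induction l; intros H; simpl. lia.
  destruct (excluded_middle_informative (P a)), (excluded_middle_informative (Q a)); simpl.
  - assert (IH := IHl (fun x Hx => H x (or_intror Hx))). lia.
  - exfalso. apply n. apply H; auto. left; auto.
  - assert (IH := IHl (fun x Hx => H x (or_intror Hx))). lia.
  - apply IHl. intros; apply H; auto. right; auto.
Qed.

Lemma cnt_if_le_length {A} (P : A -> Prop) l : (cnt_if P l <= length l)%nat.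
Proof. unfold cnt_if. apply filter_length_le. Qed.

Lemma markov_count {A} (l : list A) (f : A -> R) M : 0 < M -> (forall x, 0 <= f x) ->
  INR (cnt_if (fun x => M <= f x) l) * M <= lsum l f.
Proof.
  intros HM Hf. unfold cnt_if. induction l. unfold lsum; simpl; lra.
  unfold lsum in *. cbn [filter map fold_right].
  destruct (excluded_middle_informative (M <= f a)).
  - cbn [length]. rewrite S_INR. lra.
  - specialize (Hf a). lra.
Qed.

Lemma tail N k a lo W t s : 0 < W -> 0 <= t <= W ->
  (forall x, (x < N)%nat -> lo <= a x <= lo + W) -> (s = 1 \/ s = -1) ->
  INR (cnt_if (fun H => INR k * t <= s * (sumH N H a - INR k * (sum_below N a / INR N))) (filt N k))
  <= INR (cnt N k) * exp (INR N * t ^ 2 / (4 * W ^ 2) - INR k * t ^ 2 / W ^ 2).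
Proof.
  intros HW Ht Ha Hs.
  set (mu := sum_below N a / INR N).
  set (lam := s * (t / W ^ 2)).
  assert (Hlam2 : lam ^ 2 = t ^ 2 / W ^ 4).
  { unfold lam. destruct Hs as [-> | ->]; field; lra. }
  assert (Hl : Rabs lam * W <= 1).
  { unfold lam. rewrite Rabs_mult.
    assert (Rabs s = 1) by (destruct Hs as [-> | ->]; [apply Rabs_R1| rewrite Rabs_left; lra]).
    rewrite H, Rabs_pos_eq. 2:{ apply Rmult_le_pos; [lra|]. left; apply Rinv_0_lt_compat. nra. }
    apply (Rmult_le_reg_r W); auto. field_simplify; [|lra]. 
    assert (t <= W) by lra. nra. }
  assert (Hm := mgf N a k lo W lam (Rlt_le _ _ HW) Ha Hl). fold mu in Hm.
  set (M := exp (t / W ^ 2 * (INR k * t))).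
  assert (HM : 0 < M) by apply exp_pos.
  set (f := fun H => exp (t / W ^ 2 * (s * (sumH N H a - INR k * mu)))).
  assert (Hc := markov_count (filt N k) f M HM (fun x => Rlt_le _ _ (exp_pos _))).
  assert (Hmono : le (cnt_if (fun H => INR k * t <= s * (sumH N H a - INR k * mu)) (filt N k))
                   (cnt_if (fun x => M <= f x) (filt N k))).
  { apply cnt_if_mono. intros H _ HP. unfold M, f. apply exp_le_inc.
    apply Rmult_le_compat_l; auto. apply Rmult_le_pos; [lra|]. left; apply Rinv_0_lt_compat. nra. }
  apply le_INR in Hmono.
  assert (Hf : lsum (filt N k) f = exp (- (lam * INR k * mu)) * lsum (filt N k) (fun H => exp (lam * sumH N H a))).
  { rewrite <- lsum_scal. apply lsum_ext. intros H _. unfold f. rewrite <- exp_plus. f_equal. unfold lam. ring. }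
  assert (HE : INR (cnt_if (fun x => M <= f x) (filt N k)) * M <=
               INR (cnt N k) * exp (lam ^ 2 * INR N * W ^ 2 / 4)).
  { eapply Rle_trans. apply Hc. rewrite Hf.
    eapply Rle_trans. apply Rmult_le_compat_l. left; apply exp_pos. apply Hm.
    right. replace (exp (- (lam * INR k * mu)) * (INR (cnt N k) * exp (lam * INR k * mu + lam ^ 2 * INR N * W ^ 2 / 4)))
      with (INR (cnt N k) * (exp (- (lam * INR k * mu)) * exp (lam * INR k * mu + lam ^ 2 * INR N * W ^ 2 / 4))) by ring.
    rewrite <- exp_plus. f_equal. f_equal. ring. }
  fold mu.
  apply Rle_trans with (INR (cnt_if (fun x => M <= f x) (filt N k))); auto.
  apply (Rmult_le_reg_r M); auto.
  eapply Rle_trans. apply HE.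
  rewrite (Rmult_assoc (INR (cnt N k))). apply Rmult_le_compat_l. apply pos_INR.
  unfold M. rewrite <- exp_plus. right. f_equal. rewrite Hlam2. field. lra.
Qed.

Lemma argmin_ex (a : nat -> R) N : (0 < N)%nat -> exists x0, (x0 < N)%nat /\ forall x, (x < N)%nat -> a x0 <= a x.
Proof.
  induction N; intros HN. lia.
  destruct N as [|N].
  - exists 0%nat. split. lia. intros x Hx. assert (x = 0%nat) by lia. subst; lra.
  - destruct (IHN ltac:(lia)) as [x0 [Hx0 Hm]].
    destruct (Rle_dec (a x0) (a (S N))).
    + exists x0. split. lia. intros x Hx. destruct (Nat.eq_dec x (S N)). subst; auto. apply Hm; lia.
    + exists (S N). split. lia. intros x Hx. destruct (Nat.eq_dec x (S N)). subst; lra.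
      specialize (Hm x ltac:(lia)). lra.
Qed.

Lemma all_subsets_length N H : In H (all_subsets N) -> length H = N.
Proof.
  revert H; induction N; intros H HI; simpl in HI.
  - destruct HI as [<-|[]]. reflexivity.
  - apply in_app_or in HI. destruct HI as [HI|HI]; apply in_map_iff in HI;
      destruct HI as [H' [<- HI]]; simpl; f_equal; auto.
Qed.

Lemma filt_In N k H : In H (filt N k) -> cardH H = k /\ length H = N.
Proof.
  unfold filt. intros HI. apply filter_In in HI. destruct HI as [HI Hc].
  split. apply Nat.eqb_eq; auto. apply all_subsets_length; auto.
Qed.

Lemma sumH_const H c : sumH (length H) H (fun _ => c) = INR (cardH H) * c.
Proof.
  induction H as [|b H IH]. rewrite sumH_0. simpl; ring.
  simpl length. rewrite sumH_cons, IH. destruct b.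
  - rewrite cardH_true, S_INR. ring.
  - rewrite cardH_false. ring.
Qed.

Lemma sumH_le N H a b : (forall x, (x < N)%nat -> a x <= b x) -> sumH N H a <= sumH N H b.
Proof.
  intros Hab. unfold sumH. apply sum_below_le. intros x Hx. destruct (inH H x); auto. lra.
Qed.

Lemma cnt_if_or {A} (P Q : A -> Prop) l :
  (cnt_if (fun x => P x \/ Q x) l <= cnt_if P l + cnt_if Q l)%nat.
Proof.
  unfold cnt_if. induction l. simpl; lia. cbn [filter].
  destruct (excluded_middle_informative (P a \/ Q a)) as [HPQ|HPQ];
  destruct (excluded_middle_informative (P a)); destruct (excluded_middle_informative (Q a));
    cbn [length]; try lia; tauto.
Qed.

Lemma cnt_if_false {A} (P : A -> Prop) l : (forall x, In x l -> ~ P x) -> cnt_if P l = 0%nat.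
Proof.
  unfold cnt_if. induction l; intros H. reflexivity. cbn [filter].
  destruct (excluded_middle_informative (P a)). exfalso; apply (H a); auto. left; auto.
  apply IHl. intros; apply H; auto. right; auto.
Qed.

Lemma leak_count_y (d k : nat) (eps v beta L : R) (Rz : nat -> nat -> R) y :
  d = (2 * k)%nat -> (0 < k)%nat -> 0 < eps -> 0 < beta -> L = ln (2 / beta) -> 0 <= L ->
  0 <= v <= 1 -> 16 * (exp eps - 1) ^ 2 * L <= INR d * v ^ 2 ->
  (forall x x', (x < d)%nat -> (x' < d)%nat -> Rz x y <= exp eps * Rz x' y) ->
  INR (cnt_if (fun H => leaky v d H Rz y) (filt d k)) <= beta * INR (cnt d k).
Proof.
  intros Hd Hk Heps Hb HL HL0 Hv Hdv Hpr.
  set (a := fun x => Rz x y).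
  assert (Hd0 : (0 < d)%nat) by lia.
  assert (HdR : INR d = 2 * INR k) by (rewrite Hd, mult_INR; simpl; ring).
  assert (HkR : 0 < INR k) by (apply lt_0_INR; auto).
  set (mu := sum_below d a / INR d).
  assert (HRU : RU d Rz y = mu) by (unfold RU, mu, a, Rdiv; ring).
  assert (Hc0 : 0 <= INR (cnt d k)) by apply pos_INR.
  destruct (Rle_dec mu 0) as [Hmu0|Hmu0].
  { rewrite cnt_if_false. simpl. nra. intros H _ [HL' _]. lra. }
  apply Rnot_le_lt in Hmu0.
  destruct (argmin_ex a d Hd0) as [x0 [Hx0 Hmin]].
  set (m := a x0).
  assert (He1 : 1 < exp eps) by (rewrite <- exp_0; apply exp_increasing; auto).
  set (W := (exp eps - 1) * m).
  assert (Hrange : forall x, (x < d)%nat -> m <= a x <= m + W).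
  { intros x Hx. split. apply Hmin; auto. unfold W. replace (m + (exp eps - 1) * m) with (exp eps * m) by ring.
    apply Hpr; auto. }
  assert (Hsum_lo : INR d * m <= sum_below d a).
  { rewrite <- sum_below_const. apply sum_below_le. intros; apply Hrange; auto. }
  assert (Hsum_hi : sum_below d a <= INR d * (m + W)).
  { rewrite <- sum_below_const. apply sum_below_le. intros; apply Hrange; auto. }
  assert (HdR0 : 0 < INR d) by lra.
  assert (Hmu_lo : m <= mu).
  { unfold mu. apply (Rmult_le_reg_r (INR d)); auto. unfold Rdiv. rewrite Rmult_assoc, Rinv_l by lra. lra. }
  assert (Hmu_hi : mu <= m + W).
  { unfold mu. apply (Rmult_le_reg_r (INR d)); auto. unfold Rdiv. rewrite Rmult_assoc, Rinv_l by lra. lra. }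
  assert (Hm0 : 0 < m).
  { unfold W in Hmu_hi. destruct (Rle_dec m 0); [|lra]. exfalso. nra. }
  assert (HW0 : 0 < W) by (unfold W; nra).
  set (t := v * mu / 2).
  assert (Ht0 : 0 <= t) by (unfold t; nra).
  assert (Hdev : forall H, In H (filt d k) -> leaky v d H Rz y ->
            t <= W /\ (INR k * t <= 1 * (sumH d H a - INR k * mu) \/
                       INR k * t <= -1 * (sumH d H a - INR k * mu))).
  { intros H HI [_ Hlk].
    destruct (filt_In _ _ _ HI) as [Hcard Hlen].
    assert (Hs_lo : INR k * m <= sumH d H a).
    { rewrite <- Hcard, <- sumH_const, Hlen. apply sumH_le. intros; apply Hrange; auto. }
    assert (Hs_hi : sumH d H a <= INR k * (m + W)).
    { rewrite <- Hcard, <- sumH_const, Hlen. apply sumH_le. intros; apply Hrange; auto. }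
    set (r := sumH d H a / INR k).
    assert (Hr : sumH d H a = INR k * r) by (unfold r; field; lra).
    assert (Hr_lo : m <= r) by nra.
    assert (Hr_hi : r <= m + W) by nra.
    assert (HRUH : RUH d H Rz y = r) by (unfold RUH; rewrite Hcard; unfold r, Rdiv; rewrite Rmult_comm; reflexivity).
    rewrite HRUH, HRU in Hlk.
    destruct Hlk as [Hr0|Hlk]; [lra|].
    assert (Hq : 0 < r / mu) by (apply Rdiv_lt_0_compat; lra).
    assert (Hcase : t <= r - mu \/ t <= mu - r).
    { destruct (Rle_dec 0 (ln (r / mu))) as [Hl|Hl].
      - rewrite Rabs_right in Hlk by lra.
        assert (exp v < r / mu).
        { rewrite <- (exp_ln (r / mu)) by auto. apply exp_increasing. lra. }
        assert (1 + v <= exp v) by apply exp_ineq1_le.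
        assert (mu * (1 + v) < r).
        { apply (Rmult_lt_compat_l mu) in H0; auto. unfold Rdiv in H0.
          rewrite <- Rmult_assoc, (Rmult_comm mu r), Rmult_assoc, Rinv_r, Rmult_1_r in H0 by lra. nra. }
        left. unfold t. nra.
      - rewrite Rabs_left in Hlk by lra.
        assert (r / mu < exp (- v)).
        { rewrite <- (exp_ln (r / mu)) by auto. apply exp_increasing. lra. }
        assert (exp (- v) <= 1 - v / 2) by (apply exp_neg_half; auto).
        assert (r < mu * (1 - v / 2)).
        { apply (Rmult_lt_compat_l mu) in H0; auto. unfold Rdiv in H0.
          rewrite <- Rmult_assoc, (Rmult_comm mu r), Rmult_assoc, Rinv_r, Rmult_1_r in H0 by lra. nra. }
        right. unfold t. nra. }
    split.
    - lra.
    - rewrite Hr. destruct Hcase; [left|right]; nra. }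
  destruct (Rle_dec t W) as [HtW|HtW].
  2:{ rewrite cnt_if_false. simpl. nra. intros H HI Hl. destruct (Hdev H HI Hl). lra. }
  assert (Hup := tail d k a m W t 1 HW0 (conj Ht0 HtW) Hrange (or_introl eq_refl)).
  assert (Hdn := tail d k a m W t (-1) HW0 (conj Ht0 HtW) Hrange (or_intror eq_refl)).
  fold mu in Hup, Hdn.
  assert (Hexp : exp (INR d * t ^ 2 / (4 * W ^ 2) - INR k * t ^ 2 / W ^ 2) <= beta / 2).
  { apply Rle_trans with (exp (- L)).
    - apply exp_le_inc. rewrite HdR.
      apply (Rmult_le_reg_r (4 * W ^ 2)). nra.
      replace ((2 * INR k * t ^ 2 / (4 * W ^ 2) - INR k * t ^ 2 / W ^ 2) * (4 * W ^ 2))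
        with (- (2 * INR k * t ^ 2)) by (field; lra).
      unfold t, W. rewrite HdR in Hdv.
      assert (mu ^ 2 >= m ^ 2) by nra.
      assert (0 <= (exp eps - 1) ^ 2) by apply pow2_ge_0.
      assert (16 * (exp eps - 1) ^ 2 * L * m ^ 2 <= 2 * INR k * v ^ 2 * mu ^ 2).
      { apply Rle_trans with (2 * INR k * v ^ 2 * m ^ 2). apply Rmult_le_compat_r. apply pow2_ge_0. auto.
        apply Rmult_le_compat_l. nra. nra. }
      nra.
    - right. rewrite HL, exp_Ropp, exp_ln. field. lra. apply Rdiv_lt_0_compat; lra. }
  eapply Rle_trans. apply le_INR. apply (cnt_if_mono _ (fun H =>
     INR k * t <= 1 * (sumH d H a - INR k * mu) \/ INR k * t <= -1 * (sumH d H a - INR k * mu))).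
  { intros H HI Hl. apply (Hdev H HI Hl). }
  eapply Rle_trans. apply le_INR. apply cnt_if_or.
  rewrite plus_INR.
  assert (Hc1 := Rmult_le_compat_l _ _ _ Hc0 Hexp).
  lra.
Qed.

Lemma isum_point (f : nat -> R) y : (forall z, z <> y -> f z = 0) -> infinite_sum f (f y).
Proof.
  intros Hf.
  assert (Hs : forall n, (y <= n)%nat -> sum_f_R0 f n = f y).
  { induction n; intros Hn.
    - assert (y = 0%nat) by lia. subst. reflexivity.
    - destruct (Nat.eq_dec y (S n)).
      + subst. simpl. rewrite <- Rplus_0_l. f_equal.
        clear Hn. assert (forall m, (m <= n)%nat -> sum_f_R0 f m = 0).
        { induction m; intros Hm. simpl. apply Hf. lia. simpl. rewrite IHm by lia. rewrite Hf by lia. ring. }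
        apply H; lia.
      + simpl. rewrite IHn by lia. rewrite (Hf (S n)) by lia. ring. }
  intros eps Heps. exists y. intros n Hn. unfold R_dist. rewrite Hs by lia.
  rewrite Rminus_diag, Rabs_R0. auto.
Qed.

Lemma isum_plus f g a b : infinite_sum f a -> infinite_sum g b -> infinite_sum (fun n => f n + g n) (a + b).
Proof.
  intros Hf Hg. apply is_series_Reals. apply is_series_Reals in Hf. apply is_series_Reals in Hg.
  exact (is_series_plus _ _ _ _ Hf Hg).
Qed.

Lemma isum_scal c f a : infinite_sum f a -> infinite_sum (fun n => c * f n) (c * a).
Proof.
  intros Hf. apply is_series_Reals. apply is_series_Reals in Hf.
  exact (is_series_scal _ _ _ Hf).
Qed.

Lemma isum_le f g a b : infinite_sum f a -> infinite_sum g b -> (forall n, 0 <= f n <= g n) -> a <= b.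
Proof.
  intros Hf Hg Hfg. apply is_series_Reals in Hf. apply is_series_Reals in Hg.
  rewrite <- (is_series_unique _ _ Hf), <- (is_series_unique _ _ Hg).
  apply Series_le; auto. exists b; auto.
Qed.

Lemma isum_exists_le f g b : infinite_sum g b -> (forall n, 0 <= f n <= g n) -> exists a, infinite_sum f a.
Proof.
  intros Hg Hfg. destruct (Rseries_CV_comp f g Hfg (exist _ b Hg)) as [a Ha]. exists a; auto.
Qed.

Lemma Pr_eq p S l : infinite_sum (restrict S p) l -> Pr p S = l.
Proof.
  intros Hl. unfold Pr. destruct (excluded_middle_informative _) as [e|n].
  - destruct (constructive_indefinite_description _ e) as [l' Hl']. simpl. eapply uniqueness_sum; eauto.
  - exfalso. apply n. exists l; auto.
Qed.

Lemma Pr_point p y : Pr p (fun z => z = y) = p y.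
Proof.
  apply Pr_eq. replace (p y) with (restrict (fun z => z = y) p y).
  apply isum_point. intros z Hz. unfold restrict. destruct (excluded_middle_informative (z = y)); tauto.
  unfold restrict. destruct (excluded_middle_informative (y = y)); tauto.
Qed.

Lemma private_point eps d Rz : eps_private eps d Rz ->
  forall x x' y, (x < d)%nat -> (x' < d)%nat -> Rz x y <= exp eps * Rz x' y.
Proof.
  intros [_ Hp] x x' y Hx Hx'. specialize (Hp x x' (fun z => z = y) Hx Hx').
  rewrite !Pr_point in Hp. auto.
Qed.

Lemma isum_ext f g a : (forall n, f n = g n) -> infinite_sum f a -> infinite_sum g a.
Proof.
  intros H Hf. apply is_series_Reals. apply is_series_Reals in Hf. exact (is_series_ext _ _ _ H Hf).
Qed.

Lemma isum_zero : infinite_sum (fun _ => 0) 0.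
Proof. exact (isum_point (fun _ => 0) 0%nat (fun _ _ => eq_refl)). Qed.

Lemma isum_sum_below d : forall (F : nat -> nat -> R), (forall x, (x < d)%nat -> infinite_sum (F x) 1) ->
  infinite_sum (fun y => sum_below d (fun x => F x y)) (INR d).
Proof.
  induction d; intros F HF.
  - apply (isum_ext (fun _ => 0)). intros; reflexivity. apply isum_zero.
  - apply (isum_ext (fun y => F 0%nat y + sum_below d (fun x => F (S x) y))).
    intros; rewrite sum_below_S; reflexivity.
    rewrite S_INR, Rplus_comm. apply isum_plus. apply HF; lia.
    apply (IHd (fun x => F (S x))). intros; apply HF; lia.
Qed.

Lemma RU_props d Rz : is_randomizer d Rz -> (0 < d)%nat ->
  infinite_sum (RU d Rz) 1 /\ forall y, 0 <= RU d Rz y.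
Proof.
  intros HR Hd. assert (HdR : 0 < INR d) by (apply lt_0_INR; auto). split.
  - replace 1 with (/ INR d * INR d) by (field; lra).
    apply isum_scal. apply isum_sum_below. intros x Hx. apply HR; auto.
  - intros y. unfold RU. apply Rmult_le_pos. left; apply Rinv_0_lt_compat; auto.
    apply Rle_trans with (sum_below d (fun _ => 0)). rewrite sum_below_const; lra. apply sum_below_le. intros x Hx. apply HR; auto.
Qed.

Lemma lsum_if {A} (P : A -> Prop) l c :
  lsum l (fun H => if excluded_middle_informative (P H) then c else 0) = c * INR (cnt_if P l).
Proof.
  unfold cnt_if. induction l. unfold lsum; simpl; ring.
  unfold lsum in *. cbn [map fold_right filter].
  destruct (excluded_middle_informative (P a)); cbn [length]; rewrite IHl; try rewrite S_INR; ring.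
Qed.

Lemma lsum_isum {A} (l : list A) (F : A -> nat -> R) (P : A -> R) :
  (forall x, In x l -> infinite_sum (F x) (P x)) ->
  infinite_sum (fun y => lsum l (fun x => F x y)) (lsum l P).
Proof.
  induction l; intros HF.
  - apply (isum_ext (fun _ => 0)). intros; reflexivity. apply isum_zero.
  - apply (isum_ext (fun y => F a y + lsum l (fun x => F x y))). intros; reflexivity.
    apply isum_plus. apply HF; left; auto. apply IHl. intros; apply HF; right; auto.
Qed.

Lemma sum_Pr_le (d k : nat) (eps v beta L : R) (Rz : nat -> nat -> R) :
  d = (2 * k)%nat -> (0 < k)%nat -> 0 < eps -> 0 < beta -> L = ln (2 / beta) -> 0 <= L ->
  0 <= v <= 1 -> 16 * (exp eps - 1) ^ 2 * L <= INR d * v ^ 2 ->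
  eps_private eps d Rz ->
  lsum (filt d k) (fun H => Pr (RU d Rz) (Leak v d H Rz)) <= beta * INR (cnt d k).
Proof.
  intros Hd Hk Heps Hb HL HL0 Hv Hdv Hpriv.
  destruct (RU_props d Rz (proj1 Hpriv) ltac:(lia)) as [HRU HRU0].
  assert (Hb0 : forall H y, 0 <= restrict (Leak v d H Rz) (RU d Rz) y <= RU d Rz y).
  { intros H y. unfold restrict. destruct (excluded_middle_informative _); split; auto; try lra; apply HRU0.
    }
  assert (HPr : forall H, infinite_sum (restrict (Leak v d H Rz) (RU d Rz)) (Pr (RU d Rz) (Leak v d H Rz))).
  { intros H. destruct (isum_exists_le _ _ _ HRU (Hb0 H)) as [a Ha].
    rewrite (Pr_eq _ _ _ Ha). auto. }
  assert (Hsum := lsum_isum (filt d k) (fun H => restrict (Leak v d H Rz) (RU d Rz))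
                   (fun H => Pr (RU d Rz) (Leak v d H Rz)) (fun H _ => HPr H)).
  cbv beta in Hsum.
  assert (Hc := isum_scal (beta * INR (cnt d k)) _ _ HRU).
  rewrite Rmult_1_r in Hc.
  eapply isum_le. apply Hsum. apply Hc.
  intros y. cbv beta.
  assert (E : lsum (filt d k) (fun H => restrict (Leak v d H Rz) (RU d Rz) y)
              = RU d Rz y * INR (cnt_if (fun H => leaky v d H Rz y) (filt d k))).
  { rewrite <- lsum_if. apply lsum_ext. intros H _. unfold restrict, Leak. reflexivity. }
  rewrite E.
  assert (Hy := leak_count_y d k eps v beta L Rz y Hd Hk Heps Hb HL HL0 Hv Hdv
                 (fun x x' Hx Hx' => private_point eps d Rz Hpriv x x' y Hx Hx')).
  specialize (HRU0 y).
  split. apply Rmult_le_pos; auto. apply pos_INR.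
  rewrite (Rmult_comm (beta * _)). apply Rmult_le_compat_l; auto.
Qed.

Lemma cnt_pos N : forall k, (k <= N)%nat -> (0 < cnt N k)%nat.
Proof.
  induction N; intros k Hk.
  - assert (k = 0%nat) by lia. subst. rewrite cnt_0_0. lia.
  - destruct k. rewrite cnt_N_0. lia. rewrite cnt_S_S. specialize (IHN k ltac:(lia)). lia.
Qed.

Lemma cnt_if_compl {A} (P : A -> Prop) l : (cnt_if P l + cnt_if (fun x => ~ P x) l = length l)%nat.
Proof.
  unfold cnt_if. induction l. reflexivity. cbn [filter length].
  destruct (excluded_middle_informative (P a)); destruct (excluded_middle_informative (~ P a));
    cbn [length]; try tauto; lia.
Qed.

Lemma cnt_union {A} (l : list A) n : forall (Q : nat -> A -> Prop),
  INR (cnt_if (fun H => exists i, (i < n)%nat /\ Q i H) l) <= sum_below n (fun i => INR (cnt_if (Q i) l)).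
Proof.
  induction n; intros Q.
  - rewrite sum_below_0. rewrite cnt_if_false. simpl; lra. intros H _ [i [Hi _]]. lia.
  - rewrite sum_below_S.
    eapply Rle_trans. apply le_INR.
    apply (cnt_if_mono _ (fun H => Q 0%nat H \/ exists i, (i < n)%nat /\ Q (S i) H)).
    { intros H _ [i [Hi HQ]]. destruct i. left; auto. right. exists i. split; auto. lia. }
    eapply Rle_trans. apply le_INR. apply cnt_if_or. rewrite plus_INR.
    apply Rplus_le_compat_l. apply (IHn (fun i => Q (S i))).
Qed.

Lemma Pr_nonneg p S : (forall y, 0 <= p y) -> 0 <= Pr p S.
Proof.
  intros Hp. unfold Pr. destruct (excluded_middle_informative _) as [e|_]; [|lra].
  destruct (constructive_indefinite_description _ e) as [l Hl]. simpl.
  eapply (isum_le (fun _ => 0)). apply isum_zero. apply Hl.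
  intros y. unfold restrict. destruct (excluded_middle_informative _); split; auto; lra.
Qed.

Theorem mainTheorem7 (eps beta : R) (d n : nat) (Rs : nat -> nat -> nat -> R)
  (Heps : 0 < eps) (Hbeta : 0 < beta < 1)
  (Heven : Nat.Even d)
  (Hd : INR d > 4 * (exp (2 * eps) - 1) ^ 2 * ln (2 / beta))
  (Hpriv : forall i, (i < n)%nat -> eps_private eps d (Rs i)) :
  let v := (exp (2 * eps) - 1) * sqrt (4 / INR d * ln (2 / beta)) in
  prob_H d (fun H => forall i, (i < n)%nat ->
              Pr (RU d (Rs i)) (Leak v d H (Rs i)) < 6 * beta * INR n) >= 5 / 6.
Proof.
  intros v.
  destruct Heven as [k Hk].
  set (L := ln (2 / beta)).
  assert (HL : 0 < L).
  { unfold L. rewrite <- ln_1. apply ln_increasing. lra.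
    apply (Rmult_lt_reg_r beta). lra. unfold Rdiv. rewrite Rmult_assoc, Rinv_l by lra. lra. }
  assert (He1 : 1 < exp eps) by (rewrite <- exp_0; apply exp_increasing; auto).
  assert (He2 : exp (2 * eps) = exp eps * exp eps).
  { rewrite <- exp_plus. f_equal. ring. }
  assert (HdR : 0 < INR d).
  { fold L in Hd. rewrite He2 in Hd. assert (0 < (exp eps * exp eps - 1) ^ 2) by (apply pow_lt; nra). nra. }
  assert (Hk0 : (0 < k)%nat).
  { destruct k. simpl in Hk. subst d. simpl in HdR. lra. lia. }
  assert (Hdiv : Nat.div d 2 = k) by (rewrite Hk, Nat.mul_comm; apply Nat.div_mul; lia).
  assert (Hv0 : 0 <= v).
  { unfold v. apply Rmult_le_pos. rewrite He2; nra. apply sqrt_pos. }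
  assert (Hv2 : v ^ 2 = (exp (2 * eps) - 1) ^ 2 * (4 / INR d * L)).
  { unfold v. fold L. rewrite Rpow_mult_distr. f_equal. simpl. rewrite Rmult_1_r.
    apply sqrt_sqrt. apply Rmult_le_pos; [|lra]. apply Rmult_le_pos; [lra|]. left; apply Rinv_0_lt_compat; auto. }
  assert (Hdv2 : INR d * v ^ 2 = 4 * (exp (2 * eps) - 1) ^ 2 * L).
  { rewrite Hv2. field. lra. }
  assert (Hv1 : v <= 1).
  { fold L in Hd. assert (v ^ 2 < 1).
    { apply (Rmult_lt_reg_l (INR d)); auto. rewrite Hdv2. lra. }
    nra. }
  assert (Hdv : 16 * (exp eps - 1) ^ 2 * L <= INR d * v ^ 2).
  { rewrite Hdv2, He2.
    replace (exp eps * exp eps - 1) with ((exp eps - 1) * (exp eps + 1)) by ring.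
    rewrite Rpow_mult_distr.
    assert (0 <= (exp eps - 1) ^ 2) by apply pow2_ge_0.
    assert (4 <= (exp eps + 1) ^ 2) by nra.
    assert (0 <= (exp eps - 1) ^ 2 * L * ((exp eps + 1) ^ 2 - 4)) by (apply Rmult_le_pos; [apply Rmult_le_pos|]; lra).
    nra. }
  set (c := INR (cnt d k)).
  assert (Hc : 0 < c) by (apply lt_0_INR, cnt_pos; lia).
  assert (Hbad : forall i, (i < n)%nat ->
    INR (cnt_if (fun H => 6 * beta * INR n <= Pr (RU d (Rs i)) (Leak v d H (Rs i))) (filt d k))
      <= c / (6 * INR n)).
  { intros i Hi.
    assert (Hn : 0 < INR n) by (apply lt_0_INR; lia).
    assert (HS := sum_Pr_le d k eps v beta L (Rs i) Hk Hk0 Heps (proj1 Hbeta) eq_refl (Rlt_le _ _ HL)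
                   (conj Hv0 Hv1) Hdv (Hpriv i Hi)).
    destruct (RU_props d (Rs i) (proj1 (Hpriv i Hi)) ltac:(lia)) as [_ HRU0].
    assert (HM := markov_count (filt d k) (fun H => Pr (RU d (Rs i)) (Leak v d H (Rs i))) (6 * beta * INR n)
                   ltac:(nra) (fun H => Pr_nonneg _ _ HRU0)).
    cbv beta in HM. fold c in HS.
    apply (Rmult_le_reg_r (6 * beta * INR n)). nra.
    replace (c / (6 * INR n) * (6 * beta * INR n)) with (beta * c) by (field; lra). lra. }
  assert (Hunion : INR (cnt_if (fun H => exists i, (i < n)%nat /\
             6 * beta * INR n <= Pr (RU d (Rs i)) (Leak v d H (Rs i))) (filt d k)) <= c / 6).
  { eapply Rle_trans. apply cnt_union.
    eapply Rle_trans. apply (sum_below_le n _ (fun _ => c / (6 * INR n))). auto.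
    rewrite sum_below_const. destruct n. simpl. lra.
    right. field. apply not_0_INR. lia. }
  set (G := fun H : list bool => forall i, (i < n)%nat ->
              Pr (RU d (Rs i)) (Leak v d H (Rs i)) < 6 * beta * INR n).
  assert (Hng : INR (cnt_if (fun H => ~ G H) (filt d k)) <= c / 6).
  { eapply Rle_trans; [|apply Hunion]. apply le_INR. apply cnt_if_mono.
    intros H _ HnG. unfold G in HnG. apply not_all_ex_not in HnG. destruct HnG as [i Hi].
    exists i. apply imply_to_and in Hi. destruct Hi as [Hi1 Hi2]. split; auto. lra. }
  assert (Hcomp := cnt_if_compl G (filt d k)). apply (f_equal INR) in Hcomp.
  rewrite plus_INR in Hcomp. fold (cnt d k) in Hcomp. fold c in Hcomp.
  unfold prob_H, half_subsets. rewrite Hdiv. fold (filt d k). fold (cnt_if G (filt d k)).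
  fold (cnt d k). fold c.
  apply Rle_ge. apply (Rmult_le_reg_r c); auto. replace (INR (cnt_if G (filt d k)) / c * c) with (INR (cnt_if G (filt d k))) by (field; lra). lra.
Qed.
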